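(* Let $k_1,k_2\ge2$ with $k_1+k_2$ even, and let $a=(u_1,u_2)$ be a CLT pair where $u_1,u_2$ are closed words with first letter $1$, without self edges, of lengths $k_1$ and $k_2$. Then either $\mathrm{wt}(a)=1+\#E_a$ or $\mathrm{wt}(a)=\#E_a$. Moreover: (i) if $\mathrm{wt}(a)=1+\#E_a$, then the graph $G_a$ is a tree, $N_e^{u_i}=2$ for all $e\in E_{u_i}$ ($i=1,2$), and $N_e^a=2$ for all $e\in E_a$ except exactly one edge $e_0$, for which $N_{e_0}^a=4$; (ii) if $\mathrm{wt}(a)=\#E_a$, then for each $i=1,2$ there is an edge $e\in E_a$ with $N_e^{u_i}=1$, and $N_e^a=2$ for all $e\in E_a$.
   Context: A word is a finite sequence $w=(s_1,\dots,s_m)$ of positive integers; $\ell(w)=m$; closed means $s_1=s_m$. $\mathrm{supp}(w)$ is its set of letters. Its graph $G_w$ has vertices $\mathrm{supp}(w)$ and undirected edges $E_w=\{\{s_i,s_{i+1}\}:1\le i\le m-1\}$; a self edge is one of form $\{u,u\}$. $N_e^w=\#\{i\le m-1:\{s_i,s_{i+1}\}=e\}$. For $a=(w_1,w_2)$: $\mathrm{wt}(a)=\#(\mathrm{supp}(w_1)\cup\mathrm{supp}(w_2))$, $G_a$ has vertices $\mathrm{supp}(w_1)\cup\mathrm{supp}(w_2)$ and edges $E_a=E_{w_1}\cup E_{w_2}$, $N_e^a=N_e^{w_1}+N_e^{w_2}$. $(w_1,w_2)$ is a CLT pair if $N_e^a\ge2$ for all $e\in E_a$, $E_{w_1}\cap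 E_{w_2}\neq\emptyset$, and $\mathrm{wt}(a)=\frac{\ell(w_1)+\ell(w_2)}{2}-1$. *)

(* Defs.v *)
From mathcomp Require Import all_boot.
Set Implicit Arguments. Unset Strict Implicit. Unset Printing Implicit Defensive.

Definition positive_word (w : seq nat) : bool := all (fun x => 0 < x) w.

Definition closed_word (w : seq nat) : bool :=
  (0 < size w) && (head 0 w == last 0 w).

(* undirected edge {u,v} represented canonically as (min, max) *)
Definition mkedge (u v : nat) : nat * nat := (minn u v, maxn u v).

Definition steps (w : seq nat) : seq (nat * nat) := zip w (behead w).

Definition edge_list (w : seq nat) : seq (nat * nat) :=
  [seq mkedge p.1 p.2 | p <- steps w].

Definition no_self_edge (w : seq nat) : bool := all (fun p => p.1 != p.2) (steps w).

Definition E (w : seq nat) : seq (nat * nat) := undup (edge_list w).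
Definition N (w : seq nat) (e : nat * nat) : nat := count_mem e (edge_list w).

Definition Va (w1 w2 : seq nat) : seq nat := undup (w1 ++ w2).
Definition wt (w1 w2 : seq nat) : nat := size (Va w1 w2).
Definition Ea (w1 w2 : seq nat) : seq (nat * nat) := undup (E w1 ++ E w2).
Definition Na (w1 w2 : seq nat) (e : nat * nat) : nat := N w1 e + N w2 e.

(* CLT pair; wt = (l1+l2)/2 - 1 written without division as 2*(wt+1) = l1+l2 *)
Definition CLT_pair (w1 w2 : seq nat) : Prop :=
  (forall e, e \in Ea w1 w2 -> 2 <= Na w1 w2 e) /\
  (exists e, e \in E w1 /\ e \in E w2) /\
  2 * (wt w1 w2 + 1) = size w1 + size w2.

Definition adj (w1 w2 : seq nat) : rel nat :=
  fun u v => mkedge u v \in Ea w1 w2.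

Definition connected_Ga (w1 w2 : seq nat) : Prop :=
  forall x y, x \in Va w1 w2 -> y \in Va w1 w2 ->
    exists p : seq nat, path (adj w1 w2) x p /\ last x p = y.

Definition acyclic_Ga (w1 w2 : seq nat) : Prop :=
  (forall u, mkedge u u \notin Ea w1 w2) /\
  ~ (exists c : seq nat, 3 <= size c /\ uniq c /\ cycle (adj w1 w2) c).

Definition is_tree_Ga (w1 w2 : seq nat) : Prop :=
  connected_Ga w1 w2 /\ acyclic_Ga w1 w2.

(* Main.v *)
Require Import Defs.
From mathcomp Require Import all_boot zify.
From Stdlib Require Classical_Prop.

Definition vcard (s : seq nat) : nat := size (undup s).
Definition ecard (s : seq (nat*nat)) : nat := size (undup s).

Lemma vcard_eq s1 s2 : s1 =i s2 -> vcard s1 = vcard s2.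
Proof.
move=> H; apply: perm_size; apply: uniq_perm; try exact: undup_uniq.
by move=> z; rewrite !mem_undup.
Qed.
Lemma cardE_eq s1 s2 : s1 =i s2 -> ecard s1 = ecard s2.
Proof.
move=> H; apply: perm_size; apply: uniq_perm; try exact: undup_uniq.
by move=> z; rewrite !mem_undup.
Qed.
Lemma vcard_cons x s : vcard (x :: s) = vcard s + (x \notin s).
Proof. by rewrite /vcard /=; case: (x \in s) => /=; rewrite ?addn0 ?addn1. Qed.
Lemma cardE_cons x s : ecard (x :: s) = ecard s + (x \notin s).
Proof. by rewrite /ecard /=; case: (x \in s) => /=; rewrite ?addn0 ?addn1. Qed.
Lemma vcard_uniq s : uniq s -> vcard s = size s.
Proof. by move=> u; rewrite /vcard undup_id. Qed.

Lemma mkedgeC a b : mkedge a b = mkedge b a.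
Proof. by rewrite /mkedge minnC maxnC. Qed.

Lemma mkedge_inj a b c d : mkedge a b = mkedge c d -> (a = c /\ b = d) \/ (a = d /\ b = c).
Proof. rewrite /mkedge; case=> h1 h2; lia. Qed.

Lemma mkedge_norm a b : mkedge (mkedge a b).1 (mkedge a b).2 = mkedge a b.
Proof. rewrite /mkedge /=; congr pair; lia. Qed.

Lemma mk_end (S : seq nat) (X : seq (nat*nat)) a b :
  (forall e, e \in X -> e.1 \in S /\ e.2 \in S) -> mkedge a b \in X -> a \in S /\ b \in S.
Proof.
move=> H /H []; rewrite /mkedge /=.
have [[-> ->]|[-> ->]] : (minn a b = a /\ maxn a b = b) \/ (minn a b = b /\ maxn a b = a) by lia.
  by [].
by move=> ? ?; split.
Qed.

Lemma zip_mem (s t : seq nat) a b : (a, b) \in zip s t -> a \in s /\ b \in t.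
Proof.
elim: s t => [|x s IH] [|y t] //= ; rewrite inE; case/orP.
  by case/eqP => -> ->; rewrite !inE !eqxx.
by case/IH => h1 h2; rewrite !inE h1 h2 !orbT.
Qed.

Lemma el_end s e : e \in edge_list s -> e.1 \in s /\ e.2 \in s.
Proof.
case/mapP => [[a b]] /= /zip_mem [ha hb] ->.
have hb' : b \in s by case: s hb {ha} => //= x s'; rewrite inE => ->; rewrite orbT.
rewrite /mkedge /=.
have [[-> ->]|[-> ->]] : (minn a b = a /\ maxn a b = b) \/ (minn a b = b /\ maxn a b = a) by lia.
  by [].
by [].
Qed.

Lemma steps_cat x s t : steps (x :: s ++ t) = steps (x :: s) ++ steps (last x s :: t).
Proof. by elim: s x => [|y s IH] x //=; rewrite /steps /= in IH *; rewrite IH. Qed.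

Lemma el_cat x s t : edge_list (x :: s ++ t) = edge_list (x :: s) ++ edge_list (last x s :: t).
Proof. by rewrite /edge_list steps_cat map_cat. Qed.

Lemma el_cons2 x y s : edge_list (x :: y :: s) = mkedge x y :: edge_list (y :: s).
Proof. by []. Qed.

Lemma el_single x : edge_list [:: x] = [::].
Proof. by []. Qed.

Lemma G t : forall x V F, x \in V -> (forall e, e \in F -> e.1 \in V /\ e.2 \in V) ->
  vcard (V ++ t) + ecard F <= ecard (F ++ edge_list (x :: t)) + vcard V.
Proof.
elim: t => [|y t IH] x V F xV HF.
  by rewrite cats0 el_single cats0 addnC.
have HF' : forall e, e \in mkedge x y :: F -> e.1 \in y :: V /\ e.2 \in y :: V.
  move=> e; rewrite inE; case/orP.
    move/eqP=> ->; rewrite /mkedge /=.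
    have [[-> ->]|[-> ->]] : (minn x y = x /\ maxn x y = y) \/ (minn x y = y /\ maxn x y = x) by lia.
      by rewrite !inE xV eqxx orbT.
    by rewrite !inE xV eqxx orbT.
  by case/HF => h1 h2; rewrite !inE h1 h2 !orbT.
have IH' := IH y (y :: V) (mkedge x y :: F) (mem_head _ _) HF'.
have E1 : vcard ((y :: V) ++ t) = vcard (V ++ y :: t).
  by apply: vcard_eq => z; rewrite !inE !mem_cat !inE; case: (z == y); rewrite ?orbT.
have E2 := vcard_cons y V.
have E3 := cardE_cons (mkedge x y) F.
have E4 : ecard ((mkedge x y :: F) ++ edge_list (y :: t)) = ecard (F ++ edge_list (x :: y :: t)).
  by apply: cardE_eq => z; rewrite el_cons2 !inE !mem_cat !inE; case: (z == _); rewrite ?orbT.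
have : (y \notin V) <= (mkedge x y \notin F).
  case yV: (y \in V) => //=.
  case mF: (mkedge x y \in F) => //.
  by case: (mk_end _ _ _ _ HF mF) => _; rewrite yV.
rewrite E1 E2 E3 E4 in IH'. move: IH'. case: (y \notin V); case: (mkedge x y \notin F) => /=; lia.
Qed.

Lemma G_back t : forall x V F, x \in V -> (forall e, e \in F -> e.1 \in V /\ e.2 \in V) ->
  vcard (t ++ V) + ecard F <= ecard (F ++ edge_list (t ++ [:: x])) + vcard V.
Proof.
elim: t => [|y t IH] x V F xV HF.
  by rewrite /= el_single cats0 addnC.
have IH' := IH x V F xV HF.
have [z [r Er]] : exists z r, t ++ [:: x] = z :: r.
  by case: t {IH IH'} => [|w t']; [exists x, [::] | exists w, (t' ++ [:: x])].
have Eel : edge_list ((y :: t) ++ [:: x]) = mkedge y z :: edge_list (t ++ [:: x]).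
  by rewrite cat_cons Er el_cons2.
rewrite Eel.
have E1 : vcard ((y :: t) ++ V) = vcard (t ++ V) + (y \notin t ++ V) by rewrite cat_cons vcard_cons.
have E2 : ecard (F ++ mkedge y z :: edge_list (t ++ [:: x])) =
   ecard (F ++ edge_list (t ++ [:: x])) + (mkedge y z \notin F ++ edge_list (t ++ [:: x])).
  rewrite -cardE_cons; apply: cardE_eq => w; rewrite !inE !mem_cat !inE.
  by case: (w == _); rewrite ?orbT.
rewrite E1 E2.
have : (y \notin t ++ V) <= (mkedge y z \notin F ++ edge_list (t ++ [:: x])).
  case yV: (y \in t ++ V) => //=.
  case mF: (mkedge y z \in F ++ edge_list (t ++ [:: x])) => //.
  move: mF; rewrite mem_cat; case/orP => mF.
    by case: (mk_end _ _ _ _ HF mF) => h _; move: yV; rewrite mem_cat h orbT.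
  have HL : forall e, e \in edge_list (t ++ [:: x]) -> e.1 \in t ++ [:: x] /\ e.2 \in t ++ [:: x].
    by move=> e; apply: el_end.
  case: (mk_end _ _ _ _ HL mF) => h _; move: yV; rewrite !mem_cat; move: h.
  by rewrite mem_cat inE; case/orP => [->//|/eqP ->]; rewrite xV orbT.
move: IH'; case: (y \notin _); case: (mkedge y z \notin _) => /=; lia.
Qed.

Lemma el_split p v q : edge_list (p ++ v :: q) = edge_list (p ++ [:: v]) ++ edge_list (v :: q).
Proof.
case: p => [|a p] //=.
have -> : a :: p ++ v :: q = a :: (p ++ [:: v]) ++ q by rewrite -catA.
by rewrite el_cat last_cat.
Qed.

Lemma key W V0 F0 v : v \in V0 -> v \in W ->
  (forall e, e \in F0 -> e.1 \in V0 /\ e.2 \in V0) ->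
  vcard (V0 ++ W) + ecard F0 <= ecard (F0 ++ edge_list W) + vcard V0.
Proof.
move=> vV vW HF; case/splitPr: vW => p q.
have H1 := G q v V0 F0 vV HF.
have vV1 : v \in V0 ++ q by rewrite mem_cat vV.
have HF1 : forall e, e \in F0 ++ edge_list (v :: q) -> e.1 \in V0 ++ q /\ e.2 \in V0 ++ q.
  move=> e; rewrite mem_cat; case/orP.
    by case/HF => h1 h2; rewrite !mem_cat h1 h2.
  case/el_end; rewrite !inE !mem_cat => h1 h2; split.
    by case/orP: h1 => [/eqP->|->]; rewrite ?vV ?orbT.
  by case/orP: h2 => [/eqP->|->]; rewrite ?vV ?orbT.
have H2 := G_back p v _ _ vV1 HF1.
have E1 : vcard (p ++ V0 ++ q) = vcard (V0 ++ p ++ v :: q).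
  apply: vcard_eq => z; rewrite !mem_cat inE.
  case: (z =P v) => [->|_]; first by rewrite vV !orbT.
  by case: (z \in p); case: (z \in V0); case: (z \in q).
have E2 : ecard ((F0 ++ edge_list (v :: q)) ++ edge_list (p ++ [:: v])) = ecard (F0 ++ edge_list (p ++ v :: q)).
  apply: cardE_eq => z; rewrite el_split !mem_cat.
  rewrite [edge_list (p ++ v :: q)]el_split !mem_cat.
  by case: (z \in F0); case: (z \in edge_list (v :: q)); case: (z \in edge_list (p ++ [:: v])); rewrite /= ?orbT ?orbF.
rewrite E1 E2 in H2.
lia.
Qed.

Lemma sum_ge2 (r : seq (nat*nat)) f : (forall e, e \in r -> 2 <= f e) -> 2 * size r <= \sum_(e <- r) f e.
Proof.
elim: r => [|a r IH] H; first by rewrite big_nil.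
rewrite big_cons /=.
have h1 := H a (mem_head _ _).
have h2 : 2 * size r <= \sum_(e <- r) f e by apply: IH => e he; apply: H; rewrite inE he orbT.
lia.
Qed.

Lemma sum_eq2 (r : seq (nat*nat)) f : (forall e, e \in r -> 2 <= f e) ->
  \sum_(e <- r) f e = 2 * size r -> forall e, e \in r -> f e = 2.
Proof.
elim: r => [|a r IH] H //; rewrite big_cons /= => Hs e.
have h1 := H a (mem_head _ _).
have Hr : forall e0, e0 \in r -> 2 <= f e0 by move=> e' he; apply: H; rewrite inE he orbT.
have h2 := @sum_ge2 r f Hr.
rewrite inE; case/orP => [/eqP->|he]; first lia.
apply: IH => //; lia.
Qed.

Lemma sum_count (r l : seq (nat*nat)) : uniq r -> {subset l <= r} ->
  \sum_(e <- r) count_mem e l = size l.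
Proof.
move=> ur; elim: l => [|x l IH] sub.
  by rewrite big1_seq.
rewrite /= big_split /= IH; last by move=> z hz; apply: sub; rewrite inE hz orbT.
have : \sum_(i <- r) (x == i) = count_mem x r.
  by elim: (r) => [|a s IHs]; rewrite ?big_nil ?big_cons //= IHs eq_sym.
by move=> ->; rewrite count_uniq_mem // sub ?mem_head.
Qed.

Lemma parity (Ea : seq (nat*nat)) (e : nat*nat) (S : nat -> Prop) :
 (forall a b, mkedge a b \in Ea -> mkedge a b != e -> (S a <-> S b)) ->
 (forall a b, mkedge a b = e -> ~ (S a <-> S b)) ->
 forall s x, (forall p, p \in steps (x :: s) -> mkedge p.1 p.2 \in Ea) ->
   (odd (count_mem e (edge_list (x :: s))) <-> ~ (S x <-> S (last x s))).
Proof.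
move=> H1 H2; elim => [|y s IH] x Hs.
  split => // h; exfalso; apply: h; tauto.
have Hxy : mkedge x y \in Ea by apply: (Hs (x, y)); rewrite inE eqxx.
have Hs' : forall p, p \in steps (y :: s) -> mkedge p.1 p.2 \in Ea.
  by move=> p hp; apply: Hs; rewrite (_ : steps (x :: y :: s) = (x, y) :: steps (y :: s)) // inE hp orbT.
have IH' := IH y Hs'.
have -> : count_mem e (edge_list (x :: y :: s)) = (mkedge x y == e) + count_mem e (edge_list (y :: s)) by [].
have -> : last x (y :: s) = last y s by [].
rewrite oddD.
have FF : ~ is_true false by [].
have TT : is_true true by [].
case: (mkedge x y =P e) => [Ee|Ne].
  have hn := H2 _ _ Ee.
  rewrite /=.
  move: IH'; case: (odd _) => /= hI;
  destruct (Classical_Prop.classic (S x)); destruct (Classical_Prop.classic (S y));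
  destruct (Classical_Prop.classic (S (last y s))); tauto.
have hn := H1 _ _ Hxy (introN eqP Ne).
rewrite /=.
move: IH'; case: (odd _) => /= hI;
destruct (Classical_Prop.classic (S x)); destruct (Classical_Prop.classic (S y));
destruct (Classical_Prop.classic (S (last y s))); tauto.
Qed.

Lemma path_all (r : rel nat) (P : pred nat) x p :
  path r x p -> (forall u v, r u v -> P v) -> forall z, z \in p -> P z.
Proof.
elim: p x => [|y p IH] x //= /andP[hxy hp] H z; rewrite inE; case/orP.
  by move/eqP->; apply: H hxy.
by move=> hz; apply: IH hp H z hz.
Qed.

Lemma path_el (r : rel nat) (Q : pred (nat*nat)) x p :
  path r x p -> (forall u v, r u v -> Q (mkedge u v)) -> forall f, f \in edge_list (x :: p) -> Q f.
Proof.
elim: p x => [|y p IH] x //= /andP[hxy hp] H f; rewrite el_cons2 inE; case/orP.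
  by move/eqP->; apply: H hxy.
by move=> hf; apply: IH hp H f hf.
Qed.

Lemma steps_path (r : rel nat) x s :
  (forall q, q \in steps (x :: s) -> r q.1 q.2) -> path r x s.
Proof.
elim: s x => [|y s IH] x //= H; apply/andP; split.
  by apply: (H (x, y)); rewrite inE eqxx.
apply: IH => q hq; apply: H.
have -> : steps (x :: y :: s) = (x, y) :: steps (y :: s) by [].
by rewrite inE hq orbT.
Qed.

Lemma mk_in (S : seq nat) a b : a \in S -> b \in S -> (mkedge a b).1 \in S /\ (mkedge a b).2 \in S.
Proof.
move=> ha hb; rewrite /mkedge /=.
have [[-> ->]|[-> ->]] : (minn a b = a /\ maxn a b = b) \/ (minn a b = b /\ maxn a b = a) by lia.
  by [].
by [].
Qed.

Lemma size_el s : size (edge_list s) = (size s).-1.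
Proof. rewrite /edge_list size_map /steps size_zip size_behead; lia. Qed.

Lemma N_pos u e : e \in E u -> 0 < N u e.
Proof. by rewrite /N /E mem_undup -has_pred1 has_count. Qed.

Lemma ev2 n : ~~ odd n -> 0 < n -> 2 <= n.
Proof. by case: n => [|[|n]]. Qed.

Lemma last_rev_belast (x : nat) (p : seq nat) : last (last x p) (rev (belast x p)) = x.
Proof. by case: p => [|y p] //=; rewrite rev_cons last_rcons. Qed.


Theorem mainTheorem3 (k1 k2 : nat) (u1 u2 : seq nat) :
  2 <= k1 -> 2 <= k2 -> ~~ odd (k1 + k2) ->
  positive_word u1 -> positive_word u2 ->
  size u1 = k1 -> size u2 = k2 ->
  closed_word u1 -> closed_word u2 ->
  head 0 u1 = 1 -> head 0 u2 = 1 ->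
  no_self_edge u1 -> no_self_edge u2 ->
  CLT_pair u1 u2 ->
  (wt u1 u2 = 1 + size (Ea u1 u2) \/ wt u1 u2 = size (Ea u1 u2)) /\
  (wt u1 u2 = 1 + size (Ea u1 u2) ->
     is_tree_Ga u1 u2 /\
     (forall e, e \in E u1 -> N u1 e = 2) /\
     (forall e, e \in E u2 -> N u2 e = 2) /\
     (exists e0, [/\ e0 \in Ea u1 u2, Na u1 u2 e0 = 4 &
        forall e, e \in Ea u1 u2 -> e != e0 -> Na u1 u2 e = 2])) /\
  (wt u1 u2 = size (Ea u1 u2) ->
     (exists e, e \in Ea u1 u2 /\ N u1 e = 1) /\
     (exists e, e \in Ea u1 u2 /\ N u2 e = 1) /\
     (forall e, e \in Ea u1 u2 -> Na u1 u2 e = 2)).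
Proof.
move=> hk1 hk2 hodd _ _ s1 s2 c1 c2 h1 h2 ns1 ns2 [HNa [[ec [ec1 ec2]] Hwt]].
have [t1 Eu1 hl1] : exists2 t1, u1 = 1 :: t1 & last 1 t1 = 1.
  move: c1 h1; case: (u1) => [|a t] //= /andP[_ /eqP hl] ha.
  by subst a; exists t => //; rewrite -hl.
have [t2 Eu2 hl2] : exists2 t2, u2 = 1 :: t2 & last 1 t2 = 1.
  move: c2 h2; case: (u2) => [|a t] //= /andP[_ /eqP hl] ha.
  by subst a; exists t => //; rewrite -hl.
set W := 1 :: t1 ++ t2.
have HWv : forall z, (z \in Va u1 u2) = (z \in W).
  move=> z; rewrite /Va mem_undup Eu1 Eu2 /W !inE !mem_cat !inE.
  by case: (z == 1); rewrite ?orbT.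
have elW : edge_list W = edge_list u1 ++ edge_list u2.
  by rewrite /W el_cat hl1 Eu1 Eu2.
have HWe : forall e, (e \in Ea u1 u2) = (e \in edge_list W).
  by move=> e; rewrite /Ea /E elW mem_undup !mem_cat !mem_undup.
have Hwtc : wt u1 u2 = vcard W by apply: vcard_eq => z; rewrite -HWv /Va mem_undup.
have HEac : size (Ea u1 u2) = ecard (edge_list W).
  by apply: cardE_eq => z; rewrite -HWe /Ea mem_undup.
have EaEnd : forall e, e \in Ea u1 u2 -> e.1 \in Va u1 u2 /\ e.2 \in Va u1 u2.
  by move=> e; rewrite HWe !HWv; apply: el_end.
have BA : wt u1 u2 <= 1 + size (Ea u1 u2).
  have h := G (t1 ++ t2) 1 [:: 1] [::] (mem_head _ _) (fun e (h : e \in [::]) => False_ind _ (notF h)).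
  change (is_true (vcard W + 0 <= ecard (edge_list W) + 1)) in h.
  rewrite Hwtc HEac; clear -h; lia.
have key2 : forall V0 F0 v, v \in V0 -> {subset V0 <= Va u1 u2} -> {subset F0 <= Ea u1 u2} ->
    (forall e, e \in F0 -> e.1 \in V0 /\ e.2 \in V0) -> vcard V0 <= ecard F0 ->
    wt u1 u2 <= size (Ea u1 u2).
  move=> V0 F0 v vV sV sF HF hc.
  have vW : v \in W by rewrite -HWv sV.
  have := key W V0 F0 v vV vW HF.
  have -> : vcard (V0 ++ W) = vcard W.
    by apply: vcard_eq => z; rewrite mem_cat; case hz: (z \in V0) => //=; rewrite -HWv sV.
  have -> : ecard (F0 ++ edge_list W) = ecard (edge_list W).
    by apply: cardE_eq => z; rewrite mem_cat; case hz: (z \in F0) => //=; rewrite -HWe sF.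
  rewrite Hwtc HEac => hk; clear -hk hc; lia.
have uEa : uniq (Ea u1 u2) by apply: undup_uniq.
have sub1 : {subset edge_list u1 <= Ea u1 u2}.
  by move=> z hz; rewrite /Ea mem_undup mem_cat /E mem_undup hz.
have sub2 : {subset edge_list u2 <= Ea u1 u2}.
  by move=> z hz; rewrite /Ea mem_undup mem_cat /E !mem_undup hz orbT.
have Hsum : \sum_(e <- Ea u1 u2) Na u1 u2 e = 2 * wt u1 u2.
  rewrite /Na big_split /= /N !sum_count // !size_el; clear -Hwt s1 s2 hk1 hk2; lia.
have BB : size (Ea u1 u2) <= wt u1 u2.
  have hg := @sum_ge2 _ _ HNa; rewrite Hsum in hg; clear -hg; lia.
have ec_in : ec \in Ea u1 u2 by apply: sub1; move: ec1; rewrite /E mem_undup.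
have p1 := @N_pos _ _ ec1.
have p2 := @N_pos _ _ ec2.
split; first by clear -BA BB; lia.
split; last first.
  move=> hw.
  have hs2 : \sum_(e <- Ea u1 u2) Na u1 u2 e = 2 * size (Ea u1 u2) by rewrite Hsum hw.
  have all2 := @sum_eq2 _ _ HNa hs2.
  have := all2 _ ec_in; rewrite /Na => h.
  split; first by exists ec; split => //; clear -h p1 p2; lia.
  split; first by exists ec; split => //; clear -h p1 p2; lia.
  exact: all2.
move=> hw.
have Par : forall e, e \in Ea u1 u2 -> ~~ odd (N u1 e) /\ ~~ odd (N u2 e).
  move=> e he.
  have [x0 [y0 Ee]] : exists x0 y0, e = mkedge x0 y0.
    by move: he; rewrite HWe => /mapP [[a b] _ ->]; exists a, b.
  have [x0V y0V] : x0 \in Va u1 u2 /\ y0 \in Va u1 u2.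
    by apply: (mk_end _ _ _ _ EaEnd); rewrite -Ee.
  pose R := fun u v => (mkedge u v \in Ea u1 u2) && (mkedge u v != e).
  pose S := fun z => exists p, path R x0 p /\ last x0 p = z.
  have Sx0 : S x0 by exists [::].
  have NSy0 : ~ S y0.
    move=> [p [hp hl]].
    have nE : e \notin edge_list (x0 :: p).
      apply/negP => hin.
      have := @path_el R (fun f => f != e) x0 p hp (fun u v h => (andP h).2) e hin.
      by rewrite eqxx.
    have sF : {subset e :: edge_list (x0 :: p) <= Ea u1 u2}.
      move=> z; rewrite inE; case/orP => [/eqP->//|hz].
      exact: (@path_el R (fun f => f \in Ea u1 u2) x0 p hp (fun u v h => (andP h).1) z hz).
    have sV : {subset x0 :: p <= Va u1 u2}.
      move=> z; rewrite inE; case/orP => [/eqP->//|hz].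
      exact: (@path_all R (fun z => z \in Va u1 u2) x0 p hp
               (fun u v h => (mk_end _ _ _ _ EaEnd (andP h).1).2) z hz).
    have HF : forall f, f \in e :: edge_list (x0 :: p) -> f.1 \in x0 :: p /\ f.2 \in x0 :: p.
      move=> f; rewrite inE; case/orP => [/eqP->|hf]; last exact: el_end.
      rewrite Ee; apply: mk_in; first exact: mem_head.
      by rewrite -hl mem_last.
    have hc : vcard (x0 :: p) <= ecard (e :: edge_list (x0 :: p)).
      rewrite cardE_cons nE.
      have h := G p x0 [:: x0] [::] (mem_head _ _) (fun e (h : e \in [::]) => False_ind _ (notF h)).
      change (is_true (vcard (x0 :: p) + 0 <= ecard (edge_list (x0 :: p)) + 1)) in h.
      clear -h; lia.
    have := key2 _ _ x0 (mem_head _ _) sV sF HF hc=> hk; clear -hk hw; lia.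
  have H1 : forall a b, mkedge a b \in Ea u1 u2 -> mkedge a b != e -> (S a <-> S b).
    move=> a b hab hne; split => [[p [hp hl]]|[p [hp hl]]].
      exists (rcons p b); split; last by rewrite last_rcons.
      by rewrite rcons_path hp hl /R hab hne.
    exists (rcons p a); split; last by rewrite last_rcons.
    by rewrite rcons_path hp hl /R mkedgeC hab hne.

  have H2 : forall a b, mkedge a b = e -> ~ (S a <-> S b).
    move=> a b; rewrite Ee => /mkedge_inj [[-> ->]|[-> ->]]; move: Sx0 NSy0; tauto.
  have P1 := @parity (Ea u1 u2) e S H1 H2 t1 1.
  have P2 := @parity (Ea u1 u2) e S H1 H2 t2 1.
  rewrite /N Eu1 Eu2; split.
    have hs : forall q, q \in steps (1 :: t1) -> mkedge q.1 q.2 \in Ea u1 u2.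
      by move=> q hq; apply: sub1; rewrite Eu1; apply/mapP; exists q.
    move: (P1 hs); rewrite hl1; case: (odd _) => // h; exfalso; apply: (proj1 h isT); tauto.
  have hs : forall q, q \in steps (1 :: t2) -> mkedge q.1 q.2 \in Ea u1 u2.
    by move=> q hq; apply: sub2; rewrite Eu2; apply/mapP; exists q.
  move: (P2 hs); rewrite hl2; case: (odd _) => // h; exfalso; apply: (proj1 h isT); tauto.
have q1 := @ev2 _ (proj1 (Par _ ec_in)) p1.
have q2 := @ev2 _ (proj2 (Par _ ec_in)) p2.
have Hs4 : \sum_(e <- Ea u1 u2) Na u1 u2 e = Na u1 u2 ec + \sum_(e <- rem ec (Ea u1 u2)) Na u1 u2 e.
  by rewrite (perm_big _ (perm_to_rem ec_in)) big_cons.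
have sr := size_rem ec_in.
have memr : forall e, (e \in rem ec (Ea u1 u2)) = (e != ec) && (e \in Ea u1 u2).
  by move=> e; rewrite (mem_rem_uniq ec uEa) inE.
have Hr : forall e, e \in rem ec (Ea u1 u2) -> 2 <= Na u1 u2 e.
  by move=> e; rewrite memr => /andP[_]; apply: HNa.
have g := @sum_ge2 _ _ Hr.
have sz : 0 < size (Ea u1 u2) by case: (Ea u1 u2) ec_in.
have q3 : 4 <= Na u1 u2 ec by rewrite /Na; clear -q1 q2; lia.
have Hsr : \sum_(e <- rem ec (Ea u1 u2)) Na u1 u2 e = 2 * size (rem ec (Ea u1 u2)).
  move: Hsum g hw sz q3; rewrite Hs4 sr; set X := \sum_(e <- _) _; set s := size _; set w := wt _ _; set n := Na _ _ _; clearbody X s w n; clear; lia.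
have h4 : Na u1 u2 ec = 4.
  move: Hsum g hw sz q3; rewrite Hs4 sr; set X := \sum_(e <- _) _; set s := size _; set w := wt _ _; set n := Na _ _ _; clearbody X s w n; clear; lia.
have all2r := @sum_eq2 _ _ Hr Hsr.
have oth : forall e, e \in Ea u1 u2 -> e != ec -> Na u1 u2 e = 2.
  by move=> e he hne; apply: all2r; rewrite memr hne he.
split.
  have adjW : path (adj u1 u2) 1 (t1 ++ t2).
    apply: steps_path => q hq; rewrite /adj HWe; apply/mapP; exists q => //.
  split.
    have reach : forall z, z \in Va u1 u2 -> exists p, path (adj u1 u2) 1 p /\ last 1 p = z.
      move=> z; rewrite HWv /W inE; case/orP => [/eqP->|hz]; first by exists [::].
      move: adjW; case/splitPr: hz => r1 r2 hp; exists (rcons r1 z).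
      move: hp; rewrite cat_path => /andP[h /andP[h' _]].
      by rewrite rcons_path h h' last_rcons.
    move=> x y hx hy; have [px [hpx hlx]] := reach x hx; have [py [hpy hly]] := reach y hy.
    exists (rev (belast 1 px) ++ py); rewrite cat_path last_cat.
    have e2 : (fun z => (adj u1 u2)^~ z) =2 adj u1 u2 by move=> a b; rewrite /adj /= mkedgeC.
    have hrev : path (adj u1 u2) x (rev (belast 1 px)) by rewrite -hlx rev_path (eq_path e2).
    have hl1x : last x (rev (belast 1 px)) = 1 by rewrite -hlx last_rev_belast.
    by rewrite hl1x hrev hpy hly.
  split.
    move=> u; apply/negP; rewrite /Ea mem_undup mem_cat /E !mem_undup => /orP [] /mapP [q hq Eq].
      have := allP ns1 q hq; case: (@mkedge_inj _ _ _ _ Eq) => [[<- <-]|[<- <-]]; by rewrite eqxx.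
    have := allP ns2 q hq; case: (@mkedge_inj _ _ _ _ Eq) => [[<- <-]|[<- <-]]; by rewrite eqxx.
  move=> [c [hc3 [uc cyc]]].
  case: c hc3 uc cyc => [|d0 [|d1 [|d2 d3]]] // _ uc cyc.
  set cc := d1 :: d2 :: d3.
  have hp : path (adj u1 u2) d0 (rcons cc d0) := cyc.
  move: uc; rewrite cons_uniq inE => /andP[nc0 /andP[nc1 _]].
  have mr : forall z, (z \in d0 :: rcons cc d0) = (z \in d0 :: cc).
    by move=> z; rewrite !inE mem_rcons inE; case: (z == d0).
  have hv := @path_all (adj u1 u2) (fun z => z \in Va u1 u2) d0 (rcons cc d0) hp
      (fun u v h => (mk_end _ _ _ _ EaEnd h).2).
  have sV : {subset d0 :: cc <= Va u1 u2}.
    move=> z; rewrite inE; case/orP => [/eqP->|hz]; apply: hv; rewrite mem_rcons inE ?eqxx ?hz ?orbT //.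
  have sF : {subset edge_list (d0 :: rcons cc d0) <= Ea u1 u2}.
    exact: (@path_el (adj u1 u2) (fun f => f \in Ea u1 u2) d0 (rcons cc d0) hp (fun u v h => h)).
  have HF : forall f, f \in edge_list (d0 :: rcons cc d0) -> f.1 \in d0 :: cc /\ f.2 \in d0 :: cc.
    by move=> f /el_end; rewrite !mr.
  have nf : mkedge (last d2 d3) d0 \notin edge_list (d0 :: cc).
    apply/negP; rewrite /cc el_cons2 inE; case/orP.
      move/eqP/mkedge_inj => [[ha hb]|[ha hb]].
        by move: nc0; rewrite hb inE eqxx.
      by move: nc1; rewrite -ha mem_last.
    move=> hf.
    have HL : forall e, e \in edge_list (d1 :: d2 :: d3) -> e.1 \in d1 :: d2 :: d3 /\ e.2 \in d1 :: d2 :: d3.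
      by move=> e; apply: el_end.
    by case: (mk_end _ _ _ _ HL hf) => _; rewrite in_cons (negbTE nc0).
  have hc : vcard (d0 :: cc) <= ecard (edge_list (d0 :: rcons cc d0)).
    have -> : ecard (edge_list (d0 :: rcons cc d0)) = ecard (mkedge (last d2 d3) d0 :: edge_list (d0 :: cc)).
      apply: cardE_eq => z; rewrite -cats1 el_cat.
      have -> : edge_list [:: last d0 cc; d0] = [:: mkedge (last d2 d3) d0] by [].
      by rewrite mem_cat in_cons mem_seq1 orbC.
    rewrite cardE_cons nf.
    have h := G cc d0 [:: d0] [::] (mem_head _ _) (fun e (h : e \in [::]) => False_ind _ (notF h)).
    change (is_true (vcard (d0 :: cc) + 0 <= ecard (edge_list (d0 :: cc)) + 1)) in h.
    move: h; set a := vcard _; set b := ecard _; clearbody a b; clear; lia.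
  have := key2 _ _ d0 (mem_head _ _) sV sF HF hc.
  move: hw; set a := wt _ _; set b := size _; clearbody a b; clear; lia.
split.
  move=> e he; case: (e =P ec) => [->|/eqP hne].
    move: h4 q1 q2; rewrite /Na; set a := N u1 ec; set b := N u2 ec; clearbody a b; clear; lia.
  have he' : e \in Ea u1 u2 by apply: sub1; move: he; rewrite /E mem_undup.
  move: (oth e he' hne) (@ev2 _ (proj1 (Par e he')) (@N_pos _ _ he)).
  rewrite /Na; set a := N u1 e; set b := N u2 e; clearbody a b; clear; lia.
split.
  move=> e he; case: (e =P ec) => [->|/eqP hne].
    move: h4 q1 q2; rewrite /Na; set a := N u1 ec; set b := N u2 ec; clearbody a b; clear; lia.
  have he' : e \in Ea u1 u2 by apply: sub2; move: he; rewrite /E mem_undup.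
  move: (oth e he' hne) (@ev2 _ (proj2 (Par e he')) (@N_pos _ _ he)).
  rewrite /Na; set a := N u1 e; set b := N u2 e; clearbody a b; clear; lia.
by exists ec; split.
Qed.
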